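(* Let $k \ge 2$ be an integer. If $G$ is a connected twin-free graph with $n$ vertices and $i_{\max}(G) = k$, then $n \le 2^{k-1}+k-2$. Furthermore, equality holds only if the graph $G$ is formed by taking a clique $K_{k-1}$ and adding, for every non-empty vertex subset $S$ of this clique, a vertex whose neighbourhood is precisely $S$.
   Context: $i_{\max}(G)$ denotes the number of maximal independent sets of $G$. A graph is twin-free if no two vertices have the same open neighbourhood. *)

(* Defs.v *)
(* A simple graph is a symmetric irreflexive relation
   e : rel T on a finite type T (vertex set). *)
From mathcomp Require Import all_boot.
Set Implicit Arguments. Unset Strict Implicit. Unset Printing Implicit Defensive.

Section Graphs.
Variable T : finType.
Variable e : rel T.

Definition nbhd (x : T) : {set T} := [set y | e x y].

Definition independent (A : {set T}) : bool :=
  [forall x in A, forall y in A, ~~ e x y].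

Definition imax : nat := #|[set A : {set T} | maxset independent A]|.

Definition twin_free : Prop := forall x y : T, nbhd x = nbhd y -> x = y.

Definition connected_graph : Prop := forall x y : T, connect e x y.

Definition is_clique (C : {set T}) : bool :=
  [forall x in C, forall y in C, (x != y) ==> e x y].

Definition clique_with_all_subsets (C : {set T}) : Prop :=
  [/\ is_clique C,
      (forall v, v \notin C -> nbhd v \subset C /\ nbhd v != set0) &
      (forall S : {set T}, S \subset C -> S != set0 ->
         exists! v, v \notin C /\ nbhd v = S)].

End Graphs.

(* Main.v *)
Require Import Defs.
From mathcomp Require Import all_boot.
From mathcomp Require Import zify.
Set Implicit Arguments. Unset Strict Implicit. Unset Printing Implicit Defensive.

Section Core.
Variables (K V : finType) (U : {set K}) (s : V -> {set K}).
Hypothesis s_inj : injective s.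
Hypothesis sU : forall v, s v \subset U.
Hypothesis s0 : forall v, s v != set0.
Hypothesis sT : forall v, s v != U.
Hypothesis helly : forall P : {set V},
  {in P &, forall u v, s u :&: s v != set0} ->
  exists2 t, t \in U & forall v, v \in P -> t \in s v.

Definition closed (J : {set V}) :=
  forall v, v \in J -> exists2 v', v' \in J & s v' = U :\: s v.
Definition tr (J : {set V}) x := [set v in J | x \in s v].
Definition NN J := #|[set tr J x | x in U]|.

Lemma memsU v x : x \in s v -> x \in U.
Proof. by move=> h; apply: (subsetP (sU v)). Qed.

Lemma comp_mem v v' x : s v' = U :\: s v -> x \in U -> (x \in s v') = ~~ (x \in s v).
Proof. by move=> -> xU; rewrite in_setD xU andbT. Qed.

Lemma comp_sym v v' : s v' = U :\: s v -> s v = U :\: s v'.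
Proof.
move=> h; apply/setP=> x; rewrite h !in_setD.
case: (boolP (x \in U)) => xU; rewrite ?andbT ?andbF ?negbK //.
by apply/negbTE/negP=> /memsU; rewrite (negbTE xU).
Qed.

Lemma set_ne_in (A B : {set K}) : A \subset U -> B \subset U -> A != B ->
  exists2 z, z \in U & (z \in A) != (z \in B).
Proof.
move=> AU BU neq; case: (boolP [exists z in U, (z \in A) != (z \in B)]).
  by move=> /exists_inP [z zU h]; exists z.
move=> /exists_inPn H; case/negP: neq; apply/eqP/setP=> z.
case zU: (z \in U); first by move: (H z zU); rewrite negbK => /eqP.
have : z \notin A by apply/negP=> /(subsetP AU); rewrite zU.
have : z \notin B by apply/negP=> /(subsetP BU); rewrite zU.
by move=> /negbTE -> /negbTE ->.
Qed.

Definition maj (a b c : bool) := [|| a && b, a && c | b && c].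

Lemma lemmaE J w w' : closed J -> w \in J -> s w' = U :\: s w ->
  exists x, exists y, [/\ x \in U, y \in U, x \in s w, y \notin s w &
     forall v, v \in J -> v != w -> v != w' -> (x \in s v) = (y \in s v)].
Proof.
move=> cJ wJ hw'.
pose dist x y := #|[set v in J | (x \in s v) != (y \in s v)]|.
suff main : forall n x y, dist x y <= n -> x \in U -> y \in U -> x \in s w -> y \notin s w ->
  exists x, exists y, [/\ x \in U, y \in U, x \in s w, y \notin s w &
     forall v, v \in J -> v != w -> v != w' -> (x \in s v) = (y \in s v)].
  have [x xw] : exists x, x \in s w by apply/set0Pn; apply: s0.
  have [y yU ynw] : exists2 y, y \in U & y \notin s w.
    have := sT w; rewrite eqEsubset sU /= => /subsetPn [y yU yn]; by exists y.
  exact: (main _ x y (leqnn _) (memsU xw) yU xw ynw).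
elim=> [|n IH] x y.
  move=> d0 xU yU xw yw; exists x, y; split=> // v vJ _ _.
  apply/eqP; apply: contraTT d0 => ne; rewrite -ltnNge card_gt0; apply/set0Pn.
  by exists v; rewrite inE vJ.
move=> dn xU yU xw yw.
case: (boolP [forall v in J, (v != w) ==> (v != w') ==> ((x \in s v) == (y \in s v))]).
  move=> /forall_inP H; exists x, y; split=> // v vJ n1 n2.
  by apply/eqP; move: (H v vJ); rewrite n1 n2.
move=> /forall_inPn [l lJ]; rewrite !negb_imply => /and3P [lw lw' xyl].
have [l0 [l0J l0w l0w' xl0 yl0]] : exists l0, [/\ l0 \in J, l0 != w, l0 != w', x \in s l0 & y \notin s l0].
  case xl: (x \in s l).
    by exists l; split=> //; move: xyl; rewrite xl; case: (y \in s l).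
  have [l' l'J hl'] := cJ l lJ.
  exists l'; split=> //.
  - apply: contra lw' => /eqP e; subst l'; apply/eqP/s_inj; by rewrite (comp_sym hl') -hw'.
  - apply: contra lw => /eqP e; subst l'; apply/eqP/s_inj.
    by rewrite (comp_sym hl') -(comp_sym hw').
  - by rewrite (comp_mem hl' xU) xl.
  - by rewrite (comp_mem hl' yU); move: xyl; rewrite xl; case: (y \in s l).
have [z zU zwl] : exists2 z, z \in U & (z \in s w) != (z \in s l0).
  apply: set_ne_in => //; apply: contra l0w => /eqP e; apply/eqP/s_inj; by rewrite e.
pose P := [set v in J | maj (x \in s v) (y \in s v) (z \in s v)].
have [t tU tP] : exists2 t, t \in U & forall v, v \in P -> t \in s v.
  apply: helly => u v; rewrite !inE => /andP [_ mu] /andP [_ mv].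
  apply/set0Pn.
  move: mu mv; rewrite /maj.
  case xu: (x \in s u); case yu: (y \in s u); case zu: (z \in s u);
  case xv: (x \in s v); case yv: (y \in s v); case zv: (z \in s v) => //= _ _;
  by [exists x; rewrite inE xu xv | exists y; rewrite inE yu yv | exists z; rewrite inE zu zv].
have tmaj : forall v, v \in J -> (t \in s v) = maj (x \in s v) (y \in s v) (z \in s v).
  move=> v vJ; case m: (maj _ _ _); first by apply: tP; rewrite inE vJ m.
  have [v' v'J hv'] := cJ v vJ.
  have : t \in s v'.
    apply: tP; rewrite inE v'J /= !(comp_mem hv') //.
    by move: m; rewrite /maj; case: (x \in s v); case: (y \in s v); case: (z \in s v).
  by rewrite (comp_mem hv' tU) => /negbTE.
have agree : forall v, v \in J -> (x \in s v) = (y \in s v) -> (t \in s v) = (x \in s v).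
  move=> v vJ e; rewrite tmaj // -e /maj.
  by case: (x \in s v); case: (z \in s v).
have wmaj := tmaj w wJ; have lmaj := tmaj l0 l0J.
rewrite xw (negbTE yw) xl0 (negbTE yl0) /maj /= in wmaj lmaj.
case zw: (z \in s w).
  have zl : z \notin s l0 by move: zwl; rewrite zw; case: (z \in s l0).
  rewrite zw in wmaj; rewrite (negbTE zl) in lmaj.
  have [|||||x1 [y1 H]] := IH t y => //; last by exists x1, y1.
    rewrite -ltnS; apply: leq_trans dn; apply: proper_card; apply/properP; split.
      apply/subsetP=> v; rewrite !inE => /andP [vJ ne]; rewrite vJ /=.
      by apply: contra ne => /eqP e; rewrite (agree v vJ e) e.
    exists l0; first by rewrite inE l0J xl0 (negbTE yl0).
    by rewrite inE l0J lmaj (negbTE yl0).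
  all: try by rewrite ?wmaj.
have zl : z \in s l0.
  by move: zwl; rewrite zw; case: (z \in s l0).
rewrite zw in wmaj; rewrite zl in lmaj.
have [|||||x1 [y1 H]] := IH x t => //; last by exists x1, y1.
  rewrite -ltnS; apply: leq_trans dn; apply: proper_card; apply/properP; split.
    apply/subsetP=> v; rewrite !inE => /andP [vJ ne]; rewrite vJ /=.
    apply: contra ne => /eqP e; rewrite (agree v vJ e) //.
  exists l0; first by rewrite inE l0J xl0 (negbTE yl0).
  by rewrite inE l0J lmaj xl0.
by rewrite wmaj.
Qed.

Lemma tr_sub (J J' : {set V}) x : J' \subset J -> tr J' x = tr J x :&: J'.
Proof.
move=> sJ; apply/setP=> v; rewrite !inE; case vJ': (v \in J'); last by rewrite andbF.
by rewrite (subsetP sJ _ vJ') andbT.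
Qed.

Lemma NN_sub (J J' : {set V}) : J' \subset J ->
  [set tr J' x | x in U] = [set S :&: J' | S in [set tr J x | x in U]].
Proof.
move=> sJ; rewrite -imset_comp; apply: eq_imset => x /=; exact: tr_sub.
Qed.

Lemma step (J : {set V}) w w' : closed J -> w \in J -> s w' = U :\: s w ->
  NN (J :\: [set w; w']) < NN J.
Proof.
move=> cJ wJ hw'.
have [x [y [xU yU xw yw H]]] := lemmaE cJ wJ hw'.
rewrite /NN (NN_sub (subsetDl J [set w; w'])).
rewrite ltn_neqAle leq_imset_card andbT; apply/negP => /imset_injP inj.
have : tr J x = tr J y.
  apply: inj; try by apply: imset_f.
  rewrite -!tr_sub ?subsetDl //; apply/setP=> v; rewrite !inE.
  case: (boolP (v == w)) => vw //=; case: (boolP (v == w')) => vw' //=.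
  case vJ: (v \in J) => //=; by rewrite H.
move/setP => /(_ w); rewrite !inE wJ xw /= => e.
by move: yw; rewrite -e.
Qed.

Lemma card_pair_H (H : {set V}) w w' (x0 : K) : x0 \in U -> H = [set v | x0 \in s v] ->
  s w' = U :\: s w -> #|[set w; w'] :&: H| <= 1.
Proof.
move=> x0U -> hw'.
have : [set w; w'] :&: [set v | x0 \in s v] \subset [set (if x0 \in s w then w else w')].
  apply/subsetP=> v; rewrite !inE => /andP [/orP [] /eqP -> h]; first by rewrite h.
  by move: h; rewrite (comp_mem hw' x0U) => /negbTE ->.
by move/subset_leq_card; rewrite cards1.
Qed.

Lemma monotone (H : {set V}) (x0 : K) : x0 \in U -> H = [set v | x0 \in s v] ->
  forall J J', closed J -> closed J' -> J \subset J' ->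
  NN J + #|(J' :\: J) :&: H| <= NN J'.
Proof.
move=> x0U defH J J' cJ.
move: {2}#|J' :\: J| (leqnn #|J' :\: J|) => n.
elim: n J' => [|n IH] J' Hn cJ' sJJ'.
  have e : J' :\: J = set0 by apply/eqP; rewrite -cards_eq0 -leqn0.
  by rewrite e set0I cards0 addn0 /NN; have -> : J' = J by
    apply/eqP; rewrite eqEsubset sJJ' andbT; rewrite -setD_eq0 e.
case: (set_0Vmem (J' :\: J)) => [e|[w]].
  by rewrite e set0I cards0 addn0 /NN; have -> : J' = J by
    apply/eqP; rewrite eqEsubset sJJ' andbT; rewrite -setD_eq0 e.
rewrite inE => /andP [wJ wJ'].
have [w' w'J' hw'] := cJ' w wJ'.
have w'J : w' \notin J.
  apply/negP=> /cJ [v vJ hv]; have : v = w.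
    apply: s_inj; rewrite hv; exact: (esym (comp_sym hw')).
  by move=> e; move: wJ; rewrite -e vJ.
pose J'' := J' :\: [set w; w'].
have cJ'' : closed J''.
  move=> v; rewrite inE => /andP [vn vJ']; have [v' v'J' hv'] := cJ' v vJ'.
  exists v' => //; rewrite inE v'J' andbT; apply/negP; rewrite !inE => /orP [] /eqP e; subst v'.
    move: vn; rewrite !inE; case/norP=> _ /eqP; apply; apply: s_inj.
    by rewrite hw' (comp_sym hv').
  move: vn; rewrite !inE; case/norP=> /eqP ne _; apply: ne; apply: s_inj.
  by rewrite (comp_sym hv') (comp_sym hw').
have sJJ'' : J \subset J''.
  apply/subsetP=> v vJ; rewrite inE (subsetP sJJ' _ vJ) andbT !inE.
  by apply/norP; split; apply/negP=> /eqP e; subst v; rewrite ?vJ in wJ w'J.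
have Hn'' : #|J'' :\: J| <= n.
  rewrite -ltnS; apply: leq_trans Hn; apply: proper_card; apply/properP; split.
    by apply/setSD/subsetDl.
  by exists w; rewrite !inE ?wJ ?wJ' ?eqxx //= ?orbT.
have := IH J'' Hn'' cJ'' sJJ''.
have := step cJ' wJ' hw'.
have : #|(J' :\: J) :&: H| <= #|(J'' :\: J) :&: H| + #|[set w; w'] :&: H|.
  apply: leq_trans (leq_card_setU _ _).
  apply: subset_leq_card; apply/subsetP=> v; rewrite !inE.
  by case: (v == w); case: (v == w'); case: (v \in J); case: (v \in J'); case: (v \in H).
have := card_pair_H x0U defH hw'.
rewrite -/J''; lia.
Qed.

Definition D := [set v | [exists u, s u == U :\: s v]].

Lemma closedD : closed D.
Proof.
move=> v; rewrite inE => /existsP [u /eqP hu]; exists u => //.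
by rewrite inE; apply/existsP; exists v; rewrite -(comp_sym hu).
Qed.

Lemma closed0 : closed set0.
Proof. by move=> v; rewrite inE. Qed.

Lemma inD v u : s u = U :\: s v -> v \in D.
Proof. by move=> h; rewrite inE; apply/existsP; exists u; rewrite h. Qed.

Lemma NN0 x0 : x0 \in U -> 0 < NN set0.
Proof. by move=> x0U; rewrite /NN card_gt0; apply/set0Pn; exists (tr set0 x0); apply: imset_f. Qed.

Lemma NN_le J : NN J <= #|U|.
Proof. exact: leq_imset_card. Qed.

Lemma bound_DH x0 : x0 \in U -> 1 + #|D :&: [set v | x0 \in s v]| <= NN D.
Proof.
move=> x0U.
have := monotone x0U (erefl _) closed0 closedD (sub0set D).
rewrite setD0; have := NN0 x0U; lia.
Qed.

Definition NNs x0 := [set X : {set K} | (X \subset U :\ x0) && (X != set0)].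

Lemma card_NNs x0 : x0 \in U -> #|NNs x0| = 2 ^ (#|U| - 1) - 1.
Proof.
move=> x0U.
have -> : NNs x0 = powerset (U :\ x0) :\ set0.
  by apply/setP=> X; rewrite !inE andbC.
have h := cardsD1 set0 (powerset (U :\ x0)).
rewrite card_powerset powersetE sub0set /= in h.
have h2 := cardsD1 x0 U; rewrite x0U /= in h2.
have e : #|U :\ x0| = #|U| - 1 by lia.
rewrite e in h; by rewrite h addKn.
Qed.

Lemma counting x0 : x0 \in U ->
  #|V| + #|NNs x0 :\: ([set s v | v in ~: [set v | x0 \in s v]] :|:
                       [set U :\: s v | v in [set v | x0 \in s v]])|
  <= 2 ^ (#|U| - 1) - 1 + #|D :&: [set v | x0 \in s v]|.
Proof.
move=> x0U; set H := [set v | x0 \in s v].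
set A := [set s v | v in ~: H]; set B := [set U :\: s v | v in H].
have injB : injective (fun v => U :\: s v).
  move=> u v /= e; apply: s_inj.
  apply/setP=> x; move/setP: e => /(_ x); rewrite !in_setD.
  case: (boolP (x \in U)) => xU; rewrite ?andbT ?andbF; first by move/negb_inj.
  move=> _; apply/idP/idP => /memsU; by rewrite (negbTE xU).
have cA : #|A| = #|~: H| by rewrite card_imset.
have cB : #|B| = #|H| by rewrite card_imset.
have cV : #|H| + #|~: H| = #|V| by rewrite cardsC.
have cAB := cardsUI A B.
have sABN : A :|: B \subset NNs x0.
  apply/subsetP=> X; rewrite inE => /orP [] /imsetP [v]; rewrite !inE => hv ->.
    rewrite s0 andbT; apply/subsetP=> y yv; rewrite !inE (memsU yv) andbT.
    by apply: contraNN hv => /eqP <-.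
  apply/andP; split.
    apply/subsetP=> y; rewrite !inE => /andP [yn ->]; rewrite andbT.
    by apply: contraNN yn => /eqP ->.
  apply/set0Pn; have := sT v; rewrite eqEsubset sU /= => /subsetPn [y yU yn].
  by exists y; rewrite inE yn.
have cN : #|A :|: B| + #|NNs x0 :\: (A :|: B)| = #|NNs x0|.
  by rewrite -(cardsID (A :|: B) (NNs x0)) (setIidPr sABN).
have cI : #|A :&: B| <= #|D :&: H|.
  apply: leq_trans (leq_imset_card (fun v => U :\: s v) _); apply: subset_leq_card.
  apply/subsetP=> X; rewrite inE => /andP [/imsetP [u _ ->] /imsetP [v vH e]].
  apply/imsetP; exists v => //; rewrite inE vH andbT; exact: (inD e).
have := card_NNs x0U; lia.
Qed.

Lemma core_bound x0 : x0 \in U -> #|V| <= 2 ^ (#|U| - 1) + #|U| - 2.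
Proof.
move=> x0U; have := counting x0U; have := bound_DH x0U; have := NN_le D.
have : 0 < 2 ^ (#|U| - 1) by rewrite expn_gt0.
have : 0 < #|U| by rewrite card_gt0; apply/set0Pn; exists x0.
set P := 2 ^ _; lia.
Qed.

Lemma helly3 a b c : s a :&: s b != set0 -> s a :&: s c != set0 -> s b :&: s c != set0 ->
  exists t, [/\ t \in s a, t \in s b & t \in s c].
Proof.
move=> hab hac hbc.
have [|t _ H] := helly (P := [set a; b; c]).
  move=> u v; rewrite !inE -!orbA; case/or3P=> /eqP->; case/or3P=> /eqP->;
  by rewrite ?setIid ?s0 // setIC.
by exists t; split; apply: H; rewrite !inE eqxx ?orbT.
Qed.

Lemma in_tr (J : {set V}) x v : (v \in tr J x) = (v \in J) && (x \in s v).
Proof. by rewrite /tr inE. Qed.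

Lemma ar1 (n dj dh jh u : nat) : n + dj <= u -> jh <= 2 -> dh <= dj + jh -> dh = u - 1 -> 0 < u -> n <= 3.
Proof. lia. Qed.

Section Eq.
Variable x0 : K.
Hypothesis x0U : x0 \in U.
Let H := [set v | x0 \in s v].
Hypothesis hDH : #|D :&: H| = #|U| - 1.
Hypothesis hND : NN D = #|U|.
Hypothesis bip : forall X : {set K}, X \subset U -> X != set0 -> X != U ->
  exists v, s v = X \/ s v = U :\: X.

Lemma tr_inj : {in U &, injective (tr D)}.
Proof. by apply/imset_injP; rewrite -/(NN D) hND. Qed.

Lemma partner v : v \in D -> exists2 v', v' \in D & s v' = U :\: s v.
Proof. exact: closedD. Qed.

Lemma inner w w' a a' : w \in D -> s w' = U :\: s w -> a \in s w -> a' \in s w -> a != a' ->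
  exists l, l \in D /\ s l \proper s w.
Proof.
move=> wD hw' aw a'w aa'.
have aU := memsU aw; have a'U := memsU a'w.
have [l1 [l1D al1 a'l1]] : exists l1, [/\ l1 \in D, a \in s l1 & a' \notin s l1].
  case: (boolP [exists v in D, (a \in s v) != (a' \in s v)]); last first.
    move=> /exists_inPn Hn; case/negP: aa'; apply/eqP/tr_inj => //.
    apply/setP=> v; move: (Hn v); rewrite /tr !inE.
    by case: [exists u, _] => //= /(_ isT); rewrite negbK => /eqP.
  move=> /exists_inP [l lD ne]; case al: (a \in s l).
    by exists l; split=> //; move: ne; rewrite al; case: (a' \in s l).
  have [l' l'D hl'] := partner lD; exists l'; split => //.
    by rewrite (comp_mem hl' aU) al.
  by rewrite (comp_mem hl' a'U); move: ne; rewrite al; case: (a' \in s l).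
have [l1' l1'D hl1'] := partner l1D.
have w'D : w' \in D by apply: (inD (u := w)); exact: comp_sym.
pose J := [set w; w'; l1; l1'].
have cJ : closed J.
  move=> v; rewrite !inE -!orbA; case/or4P=> /eqP->.
  - by exists w'; rewrite ?inE ?eqxx ?orbT.
  - by exists w; rewrite ?inE ?eqxx ?orbT //; exact: comp_sym hw'.
  - by exists l1'; rewrite ?inE ?eqxx ?orbT.
  - by exists l1; rewrite ?inE ?eqxx ?orbT //; exact: comp_sym hl1'.
have sJD : J \subset D.
  apply/subsetP=> v vJ; have : [|| v == w, v == w', v == l1 | v == l1'] by move: vJ; rewrite !inE -!orbA.
  by case/or4P=> /eqP->.
have mon := monotone x0U (erefl _) cJ closedD sJD.
have JH : #|J :&: H| <= 2.
  have := card_pair_H x0U (erefl _) hw'; have := card_pair_H x0U (erefl _) hl1'.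
  have : #|J :&: H| <= #|[set w; w'] :&: H| + #|[set l1; l1'] :&: H|.
    apply: leq_trans (leq_card_setU _ _); apply: subset_leq_card.
    apply/subsetP=> v; rewrite !inE => /andP [vJ ->]; rewrite !andbT.
    by case/orP: vJ => [/orP [/orP [] | ] | ] /eqP ->; rewrite eqxx ?orbT.
  move=> hC hB hA; exact: leq_trans hC (leq_add hA hB).
have DJH : #|D :&: H| <= #|(D :\: J) :&: H| + #|J :&: H|.
  apply: leq_trans (leq_card_setU _ _); apply: subset_leq_card.
  apply/subsetP=> v; rewrite !in_setU !in_setI !in_setD.
  by case: (v \in D); case: (v \in J); case: (v \in H).
have NJ : NN J <= 3.
  have : 0 < #|U| by rewrite card_gt0; apply/set0Pn; exists x0.
  move: mon; rewrite hND -/H => mon u0; exact: ar1 mon JH DJH hDH u0.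
have quad : (s w' :&: s l1 == set0) || (s w' :&: s l1' == set0).
  apply/negPn/negP; rewrite negb_or => /andP [/set0Pn [b] /setIP [bw' bl1] /set0Pn [b'] /setIP [b'w' b'l1']].
  have bU := memsU bw'; have b'U := memsU b'w'.
  pose g (S : {set V}) := (w \in S, l1 \in S).
  have : #|[set: bool * bool]| <= NN J.
    apply: leq_trans (leq_imset_card g _); apply: subset_leq_card.
    have wJ : w \in J by rewrite !inE eqxx.
    have l1J : l1 \in J by rewrite !inE eqxx ?orbT.
    apply/subsetP=> -[[] []] _; apply/imsetP.
    - by exists (tr J a); [apply: imset_f | rewrite /g !in_tr wJ l1J aw al1].
    - by exists (tr J a'); [apply: imset_f | rewrite /g !in_tr wJ l1J a'w (negbTE a'l1)].
    - exists (tr J b); first by apply: imset_f.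
      by rewrite /g !in_tr wJ l1J bl1 -(negbK (b \in s w)) -(comp_mem hw' bU) bw'.
    - exists (tr J b'); first by apply: imset_f.
      rewrite /g !in_tr wJ l1J -(negbK (b' \in s w)) -(comp_mem hw' b'U) b'w'.
      by rewrite -(negbK (b' \in s l1)) -(comp_mem hl1' b'U) b'l1'.
  by rewrite cardsT card_prod card_bool => h; have := leq_trans h NJ.
have subw : forall l, s w' :&: s l == set0 -> s l \subset s w.
  move=> l /eqP e; apply/subsetP=> y yl; have yU := memsU yl.
  apply/negPn/negP => yw; have : y \in s w' :&: s l by rewrite inE (comp_mem hw' yU) yw yl.
  by rewrite e inE.
case/orP: quad => [e|e].
  exists l1; split => //; rewrite properE subw //=; apply/subsetPn; exists a' => //.
exists l1'; split => //; rewrite properE subw //=; apply/subsetPn; exists a => //.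
by rewrite (comp_mem hl1' aU) al1.
Qed.

Lemma single_side w : w \in D -> (#|s w| <= 1) || (#|U :\: s w| <= 1).
Proof.
move=> wD; case: (leqP #|s w| 1) => // /card_gt1P [a [a' [aw a'w aa']]].
case: (leqP #|U :\: s w| 1) => // /card_gt1P [b [b' [bw' b'w' bb']]].
exfalso.
have [w' w'D hw'] := partner wD.
rewrite -hw' in bw' b'w'.
have [l [lD /properP [slw [a2 a2w a2l]]]] := inner wD hw' aw a'w aa'.
have [l2 [l2D /properP [sl2w' [b1 b1w' b1l2]]]] := inner w'D (comp_sym hw') bw' b'w' bb'.
have [l'' _ hl''] := partner lD.
have [l2'' _ hl2''] := partner l2D.
have [a1 a1l] : exists a1, a1 \in s l by apply/set0Pn.
have [b2 b2l2] : exists b2, b2 \in s l2 by apply/set0Pn.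
have a2U := memsU a2w; have b1U := memsU b1w'.
have notww y : y \in s w' -> y \in s w -> False.
  by move=> h1 h2; move: h1; rewrite hw' inE h2.
pose X := s l :|: (s w' :\: s l2).
have XU : X \subset U.
  by apply/subsetP=> y; rewrite !inE => /orP [/memsU|/andP [_ /memsU]].
have X0 : X != set0 by apply/set0Pn; exists a1; rewrite inE a1l.
have a2X : a2 \notin X.
  rewrite !inE negb_or a2l /= negb_and; apply/orP; right.
  by apply/negP => h; apply: (notww a2).
have XT : X != U by apply: contraNneq a2X => ->.
have [v [hv|hv]] := bip XU X0 XT.
  have [|||t [tv tw tl'']] := helly3 (a := v) (b := w) (c := l'').
  - by apply/set0Pn; exists a1; rewrite inE hv inE a1l (subsetP slw a1 a1l).
  - apply/set0Pn; exists b1; rewrite inE hv hl'' !inE b1w' b1l2 b1U orbT /=.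
    by rewrite andbT; apply/negP => h; exact: (notww b1 b1w' (subsetP slw b1 h)).
  - by apply/set0Pn; exists a2; rewrite inE hl'' inE a2w a2l a2U.
  move: tv tl''; rewrite hv hl'' !inE => /orP [tl|/andP [_ tw']]; first by rewrite tl.
  by move=> _; apply: (notww t).
have [|||t [tv tw' tl2'']] := helly3 (a := v) (b := w') (c := l2'').
- apply/set0Pn; exists b2; rewrite inE hv (subsetP sl2w' b2 b2l2) andbT !inE b2l2 /=.
  rewrite (memsU b2l2) andbT negb_or andbT; apply/negP => h.
  exact: (notww b2 (subsetP sl2w' b2 b2l2) (subsetP slw b2 h)).
- apply/set0Pn; exists a2; rewrite inE hv hl2'' !inE a2U andbT negb_or a2l /= andbT.
  rewrite negb_and; apply/andP; split; last by apply/negP=> h; exact: (notww a2 (subsetP sl2w' a2 h) a2w).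
  by apply/orP; right; apply/negP => h; apply: (notww a2).
- by apply/set0Pn; exists b1; rewrite inE hl2'' inE b1w' b1l2 b1U.
move: tv tl2'' tw'; rewrite hv hl2'' !inE.
by case: (t \in s l); case: (t \in s l2); case: (t \in s w'); case: (t \in U).
Qed.

Definition Y := [set i in U | [exists v, (v \in D) && (s v == [set i])]].

Lemma compl_inj u v : U :\: s u = U :\: s v -> s u = s v.
Proof.
move=> e; apply/setP=> x; move/setP: e => /(_ x); rewrite !in_setD.
case: (boolP (x \in U)) => xU; rewrite ?andbT ?andbF; first by move/negb_inj.
move=> _; apply/idP/idP => /memsU; by rewrite (negbTE xU).
Qed.

Lemma DH_le_Y : #|D :&: H| <= #|Y|.
Proof.
pose f v := if #|s v| == 1 then s v else U :\: s v.
have finj : {in D :&: H &, injective f}.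
  move=> u v; rewrite !inE => /andP [_ xu] /andP [_ xv]; rewrite /f.
  case: ifP => _; case: ifP => _ e.
  - exact: s_inj.
  - by move: xu; rewrite e inE xv.
  - by move: xv; rewrite -e inE xu.
  - exact: s_inj (compl_inj e).
rewrite -(card_in_imset finj) -(card_imset Y (@set1_inj _)).
apply: subset_leq_card; apply/subsetP=> X /imsetP [v]; rewrite inE => /andP [vD _] ->.
rewrite /f; case: ifP => [/cards1P [i ei]|n1].
  apply/imsetP; exists i => //; rewrite inE (memsU (x := i) (v := v)) ?ei ?inE //=.
  by apply/existsP; exists v; rewrite vD ei eqxx.
have : #|U :\: s v| == 1.
  have h1 : 0 < #|s v| by rewrite card_gt0 s0.
  have h2 : 0 < #|U :\: s v|.
    rewrite card_gt0; apply/set0Pn; have := sT v; rewrite eqEsubset sU /= => /subsetPn [y yU yn].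
    by exists y; rewrite inE yn.
  move: (single_side vD) n1 h1 h2; case: #|s v| => [|[|a]] //; case: #|U :\: s v| => [|[|b]] //.
move/cards1P => [i ei]; rewrite ei; apply/imsetP; exists i => //.
have [u uD hu] := partner vD.
have iU : i \in U by move: ei => /setP /(_ i); rewrite !inE eqxx => /andP [].
by rewrite inE iU /=; apply/existsP; exists u; rewrite uD hu ei eqxx.
Qed.

Lemma exists_c : exists2 c, c \in U & U :\ c \subset Y.
Proof.
case: (boolP (U \subset Y)) => [sUY | /subsetPn [c cU cY]].
  by exists x0 => //; apply: subset_trans (subsetDl U _) sUY.
exists c => //.
have sYU : Y \subset U :\ c.
  apply/subsetP=> i iY; rewrite in_setD1.
  have iU : i \in U by move: iY; rewrite inE => /andP [].
  by rewrite iU andbT; apply/eqP => ei; move: cY; rewrite -ei iY.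
suff /eqP -> : Y == U :\ c by [].
rewrite eqEcard sYU /=; have := DH_le_Y; rewrite hDH (cardsD1 c U) cU /=.
by rewrite add1n subn1.
Qed.

Section EqC.
Variable c : K.
Hypothesis cU : c \in U.
Hypothesis cY : U :\ c \subset Y.

Lemma Q6 i : i \in U -> i != c -> (exists v, s v = [set i]) /\ (exists u, s u = U :\ i).
Proof.
move=> iU ic; have : i \in Y by apply: (subsetP cY); rewrite in_setD1 ic iU.
rewrite inE => /andP [_ /existsP [v /andP [vD /eqP hv]]].
split; first by exists v.
by have [u _ hu] := partner vD; exists u; rewrite hu hv.
Qed.

Lemma CS v : c \notin s v -> 1 < #|s v| -> False.
Proof.
move=> cv /card_gt1P [p [q [pv qv pq]]].
pose P := v |: [set u | [exists y, (y \in s v) && (s u == U :\ y)]].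
have inP u : u \in P -> u = v \/ exists2 y, y \in s v & s u = U :\ y.
  rewrite !inE => /orP [/eqP ->|/existsP [y /andP [yv /eqP h]]]; first by left.
  by right; exists y.
have cne y : y \in s v -> c != y by move=> yv; apply: contraNneq cv => ->.
have [|t tU tP] := helly (P := P).
  move=> u1 u2 /inP h1 /inP h2; apply/set0Pn.
  case: h1 => [->|[y1 y1v ->]]; case: h2 => [->|[y2 y2v ->]].
  - by exists p; rewrite inE pv.
  - case: (eqVneq p y2) => [e|ne]; last by exists p; rewrite !inE pv ne (memsU pv).
    by exists q; rewrite !inE qv -e eq_sym pq (memsU qv).
  - case: (eqVneq p y1) => [e|ne]; last by exists p; rewrite !inE pv ne (memsU pv).
    by exists q; rewrite !inE qv -e eq_sym pq (memsU qv).
  - by exists c; rewrite !inE cU !andbT !cne.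
have tv : t \in s v by apply: tP; rewrite !inE eqxx.
have tc : t != c by rewrite eq_sym cne.
have [_ [u hu]] := Q6 tU tc.
have : t \in s u by apply: tP; rewrite !inE; apply/orP; right; apply/existsP; exists t; rewrite tv hu eqxx.
by rewrite hu !inE eqxx.
Qed.

Lemma Q7a (A : {set K}) : A \subset U -> c \in A -> A != U -> exists v, s v = A.
Proof.
move=> AU cA AT.
have A0 : A != set0 by apply/set0Pn; exists c.
have [v [hv|hv]] := bip AU A0 AT; first by exists v.
have cv : c \notin s v by rewrite hv inE cA.
have : #|s v| == 1.
  have := s0 v; rewrite -card_gt0; case: (leqP #|s v| 1) => [h h0|h]; last by case: (CS cv h).
  by rewrite eqn_leq h h0.
move/cards1P => [i ei].
have iU : i \in U by apply: (memsU (v := v)); rewrite ei inE.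
have ic : i != c by apply: contraNneq cv => <-; rewrite ei inE.
have [_ [u hu]] := Q6 iU ic.
exists u; rewrite hu -ei hv; apply/setP=> x; rewrite !inE.
case: (boolP (x \in U)) => xU; rewrite ?andbT ?andbF ?negbK //.
by apply/esym/negbTE; apply: contra xU; apply: (subsetP AU).
Qed.

Lemma Q7b v : c \notin s v -> exists2 i, i != c & s v = [set i].
Proof.
move=> cv; have : #|s v| == 1.
  have := s0 v; rewrite -card_gt0; case: (leqP #|s v| 1) => [h h0|h]; last by case: (CS cv h).
  by rewrite eqn_leq h h0.
move/cards1P => [i ei]; exists i => //.
by apply: contraNneq cv => <-; rewrite ei inE.
Qed.

End EqC.

End Eq.

Lemma setDDK (A : {set K}) : A \subset U -> U :\: (U :\: A) = A.
Proof.
move=> AU; apply/setP=> x; rewrite !inE; case: (boolP (x \in U)) => xU; rewrite ?andbT ?andbF ?negbK //.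
by apply/esym/negbTE; apply: contra xU; apply: (subsetP AU).
Qed.

Lemma ar3 (n P u dh nd m : nat) : n + m <= P - 1 + dh -> 1 + dh <= nd -> nd <= u -> 0 < P -> 0 < u ->
  n = P + u - 2 -> [/\ dh = u - 1, nd = u & m = 0].
Proof. move=> *; split; lia. Qed.

Lemma core_eq x0 : x0 \in U -> #|V| = 2 ^ (#|U| - 1) + #|U| - 2 ->
  exists2 c, c \in U & [/\ forall i, i \in U -> i != c -> exists v, s v = [set i],
     forall A : {set K}, A \subset U -> c \in A -> A != U -> exists v, s v = A &
     forall v, c \notin s v -> exists2 i, i != c & s v = [set i]].
Proof.
move=> x0U eqV.
have h1 := counting x0U; have h2 := bound_DH x0U; have h3 := NN_le D.
have h4 : 0 < 2 ^ (#|U| - 1) by rewrite expn_gt0.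
have h5 : 0 < #|U| by rewrite card_gt0; apply/set0Pn; exists x0.
have [hDH hND hm] := ar3 h1 h2 h3 h4 h5 eqV.
have bip : forall X : {set K}, X \subset U -> X != set0 -> X != U ->
    exists v, s v = X \/ s v = U :\: X.
  move: hm; set A := [set s v | v in _]; set B := [set U :\: s v | v in _] => hm.
  have inAB Z : Z \in NNs x0 -> Z \in A :|: B.
    move=> ZN; apply/negPn/negP => ZAB.
    have : Z \in NNs x0 :\: (A :|: B) by rewrite inE ZAB.
    by move/eqP: hm; rewrite cards_eq0 => /eqP ->; rewrite inE.
  move=> X XU X0 XT.
  case: (boolP (x0 \in X)) => x0X.
    have : U :\: X \in NNs x0.
      rewrite inE; apply/andP; split.
        by apply/subsetP=> y; rewrite !inE => /andP [yX ->]; rewrite andbT; apply: contraNneq yX => ->.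
      apply: contra XT => /eqP e; rewrite eqEsubset XU /=; apply/subsetP=> y yU.
      apply/negPn/negP => yX; have : y \in U :\: X by rewrite inE yX.
      by rewrite e inE.
    move/inAB; rewrite inE => /orP [] /imsetP [v _ e]; exists v.
      by right.
    by left; rewrite -(setDDK (sU v)) -e setDDK.
  have : X \in NNs x0.
    rewrite inE X0 andbT; apply/subsetP=> y yX; rewrite !inE (subsetP XU y yX) andbT.
    by apply: contraNneq x0X => <-.
  move/inAB; rewrite inE => /orP [] /imsetP [v _ e]; exists v.
    by left.
  by right; rewrite e setDDK.
have [c cU cY] := exists_c x0U hDH hND bip.
exists c => //; split.
- by move=> i iU ic; case: (Q6 cY iU ic).
- move=> A AU cA AT; exact: (Q7a bip cU cY AU cA AT).
- move=> v cv; exact: (Q7b cU cY cv).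
Qed.

End Core.

Section Graph.
Variables (T : finType) (e : rel T).
Hypothesis esym : symmetric e.
Hypothesis eirr : irreflexive e.

Definition GU := [set A : {set T} | maxset (independent e) A].
Definition gs v := [set M in GU | v \in M].

Lemma in_gs M v : (M \in gs v) = (M \in GU) && (v \in M).
Proof. by rewrite /gs inE; congr andb; rewrite inE. Qed.

Lemma indepP (A : {set T}) : reflect (forall x y, x \in A -> y \in A -> ~~ e x y) (independent e A).
Proof.
apply: (iffP forall_inP) => [H x y xA yA | H x xA].
  by move: (H x xA) => /forall_inP; apply.
by apply/forall_inP => y yA; apply: H.
Qed.

Lemma ext (A : {set T}) : independent e A -> exists2 M, M \in GU & A \subset M.
Proof. by move=> iA; have [M mM sAM] := maxset_exists iA; exists M; rewrite ?inE. Qed.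

Lemma GU_indep M : M \in GU -> independent e M.
Proof. by rewrite inE => /maxsetP []. Qed.

Lemma pair_indep u v : ~~ e u v -> independent e [set u; v].
Proof.
move=> nuv; apply/indepP => x y; rewrite !inE => /orP [] /eqP -> /orP [] /eqP ->;
  by rewrite ?eirr // esym.
Qed.

Lemma adjE u v : e u v = (gs u :&: gs v == set0).
Proof.
apply/idP/idP => [euv|].
  apply/eqP/setP=> M; rewrite in_setI !in_gs in_set0; apply/negP => /andP [/andP [MU uM] /andP [_ vM]].
  by move: (indepP _ (GU_indep MU) u v uM vM); rewrite euv.
apply: contraLR => nuv; have [M MU sM] := ext (pair_indep nuv).
apply/set0Pn; exists M; rewrite in_setI !in_gs MU.
by rewrite !(subsetP sM) ?inE ?eqxx ?orbT.
Qed.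

Lemma gs0 v : gs v != set0.
Proof.
have : independent e [set v] by apply/indepP => x y; rewrite !inE => /eqP -> /eqP ->; rewrite eirr.
move/ext => [M MU sM]; apply/set0Pn; exists M; rewrite in_gs MU (subsetP sM) ?inE //.
Qed.

Lemma gsU v : gs v \subset GU.
Proof. by apply/subsetP=> M; rewrite in_gs => /andP []. Qed.

Lemma gs_inj : twin_free e -> injective gs.
Proof.
move=> tf u v h; apply: tf.
have sub : forall u v, gs u = gs v -> nbhd e u \subset nbhd e v.
  move=> u1 v1 h'; apply/subsetP => w; rewrite !inE => euw.
  apply/negPn/negP => nvw.
  have [M MU sM] := ext (pair_indep nvw).
  have : M \in gs u1 by rewrite h' in_gs MU (subsetP sM) ?inE ?eqxx.
  rewrite in_gs => /andP [_ uM].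
  have wM : w \in M by apply: (subsetP sM); rewrite !inE eqxx orbT.
  by move: (indepP _ (GU_indep MU) u1 w uM wM); rewrite euw.
by apply/eqP; rewrite eqEsubset !sub.
Qed.

Lemma ghelly (P : {set T}) : {in P &, forall u v, gs u :&: gs v != set0} ->
  exists2 t, t \in GU & forall v, v \in P -> t \in gs v.
Proof.
move=> H.
have iP : independent e P.
  by apply/indepP => x y xP yP; rewrite adjE; apply: H.
have [M MU sM] := ext iP; exists M => // v vP; rewrite in_gs MU (subsetP sM) //.
Qed.

Lemma exists_edge : 2 <= imax e -> exists x y, e x y.
Proof.
move=> h; case: (boolP [exists x, exists y, e x y]).
  by move=> /existsP [x /existsP [y exy]]; exists x, y.
move=> /existsPn H; exfalso.
have all : forall M, M \in GU -> M = setT.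
  move=> M; rewrite inE => /maxsetP [_ mx]; symmetry; apply: mx; last exact: subsetT.
  apply/indepP=> x y _ _; move: (H x) => /existsPn; apply.
have : #|GU| <= 1.
  rewrite -(cards1 (setT : {set T})); apply: subset_leq_card; apply/subsetP=> M MU.
  by rewrite inE (all M MU).
by rewrite /imax in h; move: h; rewrite -/GU; case: #|GU| => [|[|]].
Qed.

Lemma gsT v : connected_graph e -> 2 <= imax e -> gs v != GU.
Proof.
move=> conn h2; have [x [y exy]] := exists_edge h2.
have [u uv] : exists u, u != v.
  case: (eqVneq x v) => [exv|nxv]; last by exists x.
  exists y; rewrite -exv; apply: contraTneq exy => ->; by rewrite eirr.
have := conn v u => /connectP [p pth elast].
case: p pth elast => [|w p] /=; first by move=> _ euv; move: uv; rewrite euv eqxx.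
move=> /andP [evw _] _.
have : independent e [set w] by apply/indepP => a b; rewrite !inE => /eqP -> /eqP ->; rewrite eirr.
move/ext => [M MU sM].
apply/eqP => hv.
have : M \in gs v by rewrite hv.
rewrite in_gs => /andP [_ vM].
have wM : w \in M by apply: (subsetP sM); rewrite !inE.
by move: (indepP _ (GU_indep MU) v w vM wM); rewrite evw.
Qed.

End Graph.

Section Struct.
Variables (T : finType) (e : rel T).
Hypothesis esym : symmetric e.
Hypothesis eirr : irreflexive e.
Hypothesis tf : twin_free e.
Hypothesis sTh : forall v, gs e v != GU e.

Lemma structure (c : {set T}) : c \in GU e ->
  (forall i, i \in GU e -> i != c -> exists v, gs e v = [set i]) ->
  (forall A : {set {set T}}, A \subset GU e -> c \in A -> A != GU e -> exists v, gs e v = A) ->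
  (forall v, c \notin gs e v -> exists2 i, i != c & gs e v = [set i]) ->
  exists C : {set T}, #|C| = #|GU e| - 1 /\ clique_with_all_subsets e C.
Proof.
move=> cU S1 S2 S3.
have inj := gs_inj esym eirr tf.
have adj := adjE esym eirr.
pose C := [set v | c \notin gs e v].
have inC v : (v \in C) = (c \notin gs e v) by rewrite inE.
have iU i v : gs e v = [set i] -> i \in GU e.
  by move=> h; apply: (subsetP (gsU e v)); rewrite h inE.
have adj1 v y i : gs e y = [set i] -> e v y = (i \notin gs e v).
  move=> hy; rewrite adj hy; apply/eqP/idP => [h|h].
    apply/negP => iv; have : i \in gs e v :&: [set i] by rewrite in_setI iv in_set1 eqxx.
    by rewrite h in_set0.
  apply/setP=> z; rewrite in_setI in_set1 in_set0; apply/negP => /andP [zv /eqP ezi].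
  by move: h; rewrite -ezi zv.
have adjc v y : c \in gs e v -> c \in gs e y -> e v y = false.
  move=> cv cy; rewrite adj; apply/negP => /eqP h.
  have : c \in gs e v :&: gs e y by rewrite in_setI cv cy.
  by rewrite h in_set0.
exists C; split.
  rewrite -(card_imset C inj).
  have -> : [set gs e v | v in C] = [set [set i] | i in GU e :\ c].
    apply/setP => X; apply/imsetP/imsetP => [[v vC ->]|[i iUc ->]].
      rewrite inC in vC; have [i ic hi] := S3 v vC; exists i => //.
      by rewrite in_setD1 ic (iU i v hi).
    move: iUc; rewrite in_setD1 => /andP [ic iU'].
    have [v hv] := S1 i iU' ic; exists v => //.
    by rewrite inC hv inE eq_sym.
  by rewrite (card_imset _ (@set1_inj _)) (cardsD1 c (GU e)) cU add1n subn1.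
split.
- apply/forall_inP => x xC; apply/forall_inP => y yC; apply/implyP => xy.
  rewrite inC in xC; rewrite inC in yC.
  have [i ic hi] := S3 x xC; have [j jc hj] := S3 y yC.
  rewrite (adj1 x y j hj) hi inE; apply: contra xy => /eqP eji.
  by apply/eqP/inj; rewrite hi hj eji.
- move=> v; rewrite inC negbK => cv; split.
    apply/subsetP=> w; rewrite inE => evw; rewrite inC.
    by apply/negP => cw; move: evw; rewrite (adjc v w cv cw).
  have [i iU' iv] : exists2 i, i \in GU e & i \notin gs e v.
    by have := sTh v; rewrite eqEsubset gsU /= => /subsetPn [i iU' iv]; exists i.
  have ic : i != c by apply: contraNneq iv => ->.
  have [w hw] := S1 i iU' ic.
  apply/set0Pn; exists w; rewrite inE (adj1 v w i hw) iv //.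
- move=> S SC S0.
  pose X := GU e :\: \bigcup_(w in S) gs e w.
  have SC' w : w \in S -> c \notin gs e w by move=> wS; rewrite -inC (subsetP SC w wS).
  have key y i : y \in C -> gs e y = [set i] -> (i \in \bigcup_(w in S) gs e w) = (y \in S).
    move=> yC hy; apply/bigcupP/idP => [[w wS iw]|yS]; last by exists y => //; rewrite hy inE.
    have wC := subsetP SC w wS; rewrite inC in wC.
    have [j jc hj] := S3 w wC.
    move: iw; rewrite hj inE => /eqP eij.
    suff -> : y = w by [].
    by apply: inj; rewrite hy hj eij.
  have cX : c \in X.
    rewrite in_setD cU andbT; apply/negP => /bigcupP [w wS cw].
    by move: (SC' w wS); rewrite cw.
  have XU : X \subset GU e by apply: subsetDl.
  have XT : X != GU e.
    have [w wS] := set0Pn _ S0.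
    have wC := subsetP SC w wS; rewrite inC in wC.
    have [i ic hi] := S3 w wC.
    apply/negP => /eqP eX.
    have : i \in X by rewrite eX (iU i w hi).
    rewrite in_setD (key w i) // ?wS //; exact: subsetP SC w wS.
  have [v hv] := S2 X XU cX XT.
  have vC : v \notin C by rewrite inC hv cX.
  have nbS : forall v', v' \notin C -> (nbhd e v' = S <-> gs e v' = X).
    move=> v' v'C; rewrite inC negbK in v'C; split => [hn|hs].
      apply/setP=> i; case iU'': (i \in GU e); last first.
        rewrite in_setD iU'' andbF; apply/negbTE; apply: contraFN iU''.
        exact: (subsetP (gsU e v') i).
      case: (eqVneq i c) => [->|ic]; first by rewrite v'C cX.
      have [y hy] := S1 i iU'' ic.
      have yC : y \in C by rewrite inC hy inE eq_sym.
      have h1 : (y \in S) = e v' y by rewrite -hn inE.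
      by rewrite in_setD iU'' andbT (key y i yC hy) h1 (adj1 v' y i hy) negbK.
    apply/setP=> y; rewrite inE; case yC: (y \in C).
      have yC' := yC; rewrite inC in yC'; have [i ic hi] := S3 y yC'.
      by rewrite (adj1 v' y i hi) hs in_setD (iU i y hi) andbT negbK (key y i yC hi).
    have yC' : c \in gs e y by move: yC; rewrite inC => /negbFE.
    rewrite (adjc v' y v'C yC').
    symmetry; apply/negbTE/negP => yS; by move: (subsetP SC y yS); rewrite yC.
  exists v; split; first by split => //; apply/(nbS v vC).
  move=> v' [v'C hn]; apply: inj; rewrite hv; symmetry; exact/(nbS v' v'C).
Qed.


End Struct.

Theorem theorem1p2 (k : nat) (T : finType) (e : rel T) :
  2 <= k ->
  symmetric e -> irreflexive e ->
  connected_graph e -> twin_free e -> imax e = k ->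
  #|T| <= 2 ^ (k - 1) + k - 2 /\
  (#|T| = 2 ^ (k - 1) + k - 2 ->
     exists C : {set T}, #|C| = k - 1 /\ clique_with_all_subsets e C).
Proof.
move=> k2 esym eirr conn tf hk.
have hU : #|GU e| = k by rewrite -hk.
have h2 : 1 < imax e by rewrite hk.
have sinj := gs_inj esym eirr tf.
have sT : forall v, gs e v != GU e by move=> v; exact: gsT eirr v conn h2.
have hel := @ghelly T e esym eirr.
have [x0 x0U _] : exists2 x0, x0 \in GU e & set0 \subset x0.
  by apply: ext; apply/indepP => x y; rewrite inE.
split.
  by rewrite -hU; exact: (core_bound sinj (gsU e) (gs0 eirr) sT hel x0U).
move=> eqT; rewrite -hU in eqT.
have [c cU [S1 S2 S3]] := core_eq sinj (gsU e) (gs0 eirr) sT hel x0U eqT.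
rewrite -hU; exact: (structure esym eirr tf sT cU S1 S2 S3).
Qed.
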